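(* Let $M=\mathbb{R}^{1,1}$ be the two-dimensional Minkowski plane with canonical coordinates $(x^0,x^1)$, light-cone coordinates $u=x^0+x^1$, $v=x^0-x^1$, and causal order $x\le_M y$ iff $u(x)\le u(y)$ and $v(x)\le v(y)$. Let $\tilde{\mathcal{A}}_M$ be the linear span of smooth bounded real functions on $M$ with bounded derivatives which are causal (non-decreasing for $\le_M$), and $\tilde{\mathcal{A}}=\tilde{\mathcal{A}}_M\otimes M_2(\mathbb{C})$. Fix real numbers $d_1,d_2$ and $D_F=\mathrm{diag}(d_1,d_2)$. Let $\mathcal{C}$ be the set of self-adjoint $\alpha\in\tilde{\mathcal{A}}$ (smooth functions $M\to M_2(\mathbb{C})$ with Hermitian values) such that at every point of $M$ the $4\times 4$ Hermitian matrix $$\begin{pmatrix}2\partial_u\alpha & [D_F,\alpha]\\ -[D_F,\alpha] & 2\partial_v\alpha\end{pmatrix}$$ is positive semidefinite. Then for all $x,y\in M$: $$x\le_M y\iff \alpha(x)\le\alpha(y)\text{ (as Hermitian matrices) for all }\alpha\in\mathcal{C}.$$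
   Context: The displayed positivity condition is the pointwise form of the condition $j[D,\alpha]\le 0$ for the product Lorentzian spectral triple with $D=D_M\otimes 1+\gamma^0\gamma^1\otimes D_F$, $D_M=-i\gamma^\mu\partial_\mu$, $j=i\gamma^0\otimes 1$, $\gamma_0=\begin{pmatrix}0&i\\ i&0\end{pmatrix}$, $\gamma_1=\begin{pmatrix}0&-i\\ i&0\end{pmatrix}$; $\mathcal{C}$ is the resulting causal cone. For Hermitian matrices, $A\le B$ means $B-A$ is positive semidefinite. *)

(* Defs.v *)
From HB Require Import structures.
From mathcomp Require Import all_boot all_order all_algebra.
From mathcomp Require Import all_classical all_reals all_analysis.
From mathcomp Require Import complex.

Set Implicit Arguments.
Unset Strict Implicit.
Unset Printing Implicit Defensive.

Import Order.TTheory GRing.Theory Num.Theory.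
Import numFieldNormedType.Exports.
Local Open Scope ring_scope.

Section Defs.
Variable R : realType.

Notation M := 'rV[R]_2.

Definition x0 (x : M) : R := x 0 0.
Definition x1 (x : M) : R := x 0 1.
Definition lc_u (x : M) : R := x0 x + x1 x.
Definition lc_v (x : M) : R := x0 x - x1 x.

Definition causal_le (x y : M) : Prop := lc_u x <= lc_u y /\ lc_v x <= lc_v y.

Definition partial (i : 'I_2) (f : M -> R) : M -> R :=
  fun x => 'D_(delta_mx 0 i) f x.

Definition iter_partial (ds : seq 'I_2) (f : M -> R) : M -> R :=
  foldr partial f ds.

Definition smooth (f : M -> R) : Prop :=
  forall (ds : seq 'I_2) (x : M), differentiable (iter_partial ds f) x.

Definition bounded_all_derivs (f : M -> R) : Prop :=
  forall ds : seq 'I_2, exists C : R, forall x : M, `|iter_partial ds f x| <= C.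

Definition causal_fun (f : M -> R) : Prop :=
  forall x y : M, causal_le x y -> f x <= f y.

Definition causal_generator (f : M -> R) : Prop :=
  [/\ smooth f, bounded_all_derivs f & causal_fun f].

(* alpha lies in tilde A = tilde A_M (x) M_2(C): a finite sum of
   (causal generator) (x) (complex 2x2 matrix) *)
Definition in_Atilde (alpha : M -> 'M[R[i]]_2) : Prop :=
  exists (n : nat) (f : 'I_n -> M -> R) (m : 'I_n -> 'M[R[i]]_2),
    (forall k, causal_generator (f k)) /\
    (forall x, alpha x = \sum_(k < n) ((f k x)%:C)%C *: m k).

Definition adjmx n (A : 'M[R[i]]_n) : 'M[R[i]]_n := (map_mx Num.conj A)^T.
Definition hermmx n (A : 'M[R[i]]_n) : Prop := adjmx A = A.
Definition psdmx n (A : 'M[R[i]]_n) : Prop :=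
  hermmx A /\
  forall v : 'cV[R[i]]_n, 0 <= ((map_mx Num.conj v)^T *m A *m v) 0 0.
Definition lemx n (A B : 'M[R[i]]_n) : Prop := psdmx (B - A).

Definition selfadj (alpha : M -> 'M[R[i]]_2) : Prop :=
  forall x, hermmx (alpha x).

Definition dmx (w : M) (alpha : M -> 'M[R[i]]_2) (x : M) : 'M[R[i]]_2 :=
  \matrix_(a, b) (('D_w (fun y => complex.Re (alpha y a b)) x) +i*
                  ('D_w (fun y => complex.Im (alpha y a b)) x))%C.

(* the coordinate vector fields d/du = (d_0 + d_1)/2, d/dv = (d_0 - d_1)/2 *)
Definition dir_u : M := \row_(j < 2) (2%:R^-1 : R).
Definition dir_v : M := \row_(j < 2) (if j == 0 then 2%:R^-1 else - 2%:R^-1 : R).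

Definition d_u alpha x := dmx dir_u alpha x.
Definition d_v alpha x := dmx dir_v alpha x.

Definition DF (d1 d2 : R) : 'M[R[i]]_2 :=
  diag_mx (\row_(j < 2) ((if j == 0 then d1 else d2)%:C)%C).

Definition commDF (d1 d2 : R) (A : 'M[R[i]]_2) : 'M[R[i]]_2 :=
  DF d1 d2 *m A - A *m DF d1 d2.

Definition causal_block (d1 d2 : R) (alpha : M -> 'M[R[i]]_2) (x : M)
  : 'M[R[i]]_(2 + 2) :=
  block_mx (2%:R *: d_u alpha x) (commDF d1 d2 (alpha x))
           (- commDF d1 d2 (alpha x)) (2%:R *: d_v alpha x).

Definition causal_cone (d1 d2 : R) (alpha : M -> 'M[R[i]]_2) : Prop :=
  [/\ in_Atilde alpha, selfadj alpha &
      forall x, psdmx (causal_block d1 d2 alpha x)].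

End Defs.

(* Main.v *)
Require Import Defs.
From HB Require Import structures.
From mathcomp Require Import all_boot all_order all_algebra.
From mathcomp Require Import all_classical all_reals all_analysis.
From mathcomp Require Import complex.
From mathcomp Require Import ring lra.
Import Order.TTheory GRing.Theory Num.Theory.
Import numFieldNormedType.Exports.
Local Open Scope ring_scope.
Set Implicit Arguments.
Unset Strict Implicit.
Unset Printing Implicit Defensive.
Section A.
Variable R : realType.
Local Notation M := 'rV[R]_2.

Lemma derive_aff (U V : normedModType R) (g : V -> R) (A : U -> V) (x w : U) (w' : V) :
 (forall e : R, A (e *: w + x) = e *: w' + A x) ->
 (derivable (g \o A) x w <-> derivable g (A x) w') /\ 'D_w (g \o A) x = 'D_w' g (A x).
Proof.
move=> HA.
have E : (fun h : R => h^-1 *: (((g \o A) \o shift x) (h *: w) - (g \o A) x)) =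
  (fun h => h^-1 *: ((g \o shift (A x)) (h *: w') - g (A x))).
  by apply/funext => h /=; rewrite HA.
by rewrite /derivable /derive E.
Qed.

Lemma mono_dir (g : M -> R) (w z : M) : (forall p, derivable g p w) ->
  (forall p, 0 <= 'D_w g p) -> forall a, 0 <= a -> g z <= g (a *: w + z).
Proof.
move=> dg pos a a0.
pose A := fun t : R => t *: w + z.
have HA t : forall e : R, A (e *: 1 + t) = e *: w + A t.
  by move=> e; rewrite /A -[e *: 1]/(e * 1) mulr1 scalerDl addrA.
have dh t : derivable (g \o A) t 1 /\ derive1 (g \o A) t = 'D_w g (A t).
  have [h1 h2] := derive_aff g (HA t).
  by split; [apply/h1; apply: dg | rewrite derive1E h2].
have := @ger0_derive1_ndecr R (g \o A) 0 a _ _ _ 0 a (lexx _) a0 (lexx _).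
rewrite /= /A scale0r add0r; apply.
- by move=> t _; case: (dh t).
- by move=> t _; case: (dh t) => _ ->.
- by apply: derivable_within_continuous => t _; case: (dh t).
Qed.

Lemma decomp (x y : M) :
  y = (lc_v y - lc_v x) *: (dir_v R) + ((lc_u y - lc_u x) *: (dir_u R) + x).
Proof.
apply/rowP => j; rewrite !mxE /lc_u /lc_v /x0 /x1.
have : j = 0 \/ j = 1.
  case: j => [[|[|k]]] Hj; [left|right|by []]; exact/val_inj.
by case=> ->; rewrite /=; lra.
Qed.

Lemma mono_causal (g : M -> R) :
  (forall p, derivable g p (dir_u R)) -> (forall p, derivable g p (dir_v R)) ->
  (forall p, 0 <= 'D_(dir_u R) g p) -> (forall p, 0 <= 'D_(dir_v R) g p) ->
  forall x y, causal_le x y -> g x <= g y.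
Proof.
move=> du dv pu pv x y [hu hv].
rewrite [in X in _ <= X](decomp x y).
have h1 := mono_dir x du pu (a:=lc_u y - lc_u x).
have h2 := mono_dir ((lc_u y - lc_u x) *: (dir_u R) + x) dv pv (a:=lc_v y - lc_v x).
rewrite !subr_ge0 in h1 h2.
exact: le_trans (h1 hu) (h2 hv).
Qed.
End A.
Section C.
Variable R : realType.
Local Notation M := 'rV[R]_2.
Local Notation adjv v := ((map_mx Num.conj v)^T).

Lemma derive_lin n (f : 'I_n -> M -> R) (c : 'I_n -> R) (p w : M) :
  (forall k, derivable (f k) p w) ->
  derivable (fun z => \sum_k f k z * c k) p w /\
  'D_w (fun z => \sum_k f k z * c k) p = \sum_k 'D_w (f k) p * c k.
Proof.
move=> df.
have -> : (fun z => \sum_k f k z * c k) = \sum_k (c k \*: f k).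
  by rewrite fct_sumE; apply/funext => z; apply: eq_bigr => k _; rewrite mulrC.
split; first by apply: derivable_sum => k; apply: derivableZ.
rewrite derive_sum; last by move=> k; apply: derivableZ.
by apply: eq_bigr => k _; rewrite deriveZ // mulrC.
Qed.

Lemma sumC n (r : 'I_n -> R) (c : 'I_n -> R[i]) :
  \sum_k ((r k)%:C)%C * c k =
  ((\sum_k r k * complex.Re (c k)) +i* (\sum_k r k * complex.Im (c k)))%C.
Proof.
elim/big_rec3: _ => [//|k s0 s1 s2 _ ->].
case: (c k) => a b; rewrite /=; congr (_ +i* _)%C; ring.
Qed.

Lemma ReSum n (F : 'I_n -> R[i]) :
  complex.Re (\sum_k F k) = \sum_k complex.Re (F k).
Proof.
elim/big_rec2: _ => [//|k s1 s2 _ <-]. by case: (F k); case: s2.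
Qed.

Lemma ImSum n (F : 'I_n -> R[i]) :
  complex.Im (\sum_k F k) = \sum_k complex.Im (F k).
Proof.
elim/big_rec2: _ => [//|k s1 s2 _ <-]. by case: (F k); case: s2.
Qed.

Lemma ReM (r : R) (c : R[i]) : complex.Re ((r%:C)%C * c) = r * complex.Re c.
Proof. by case: c => a b /=; rewrite mul0r subr0. Qed.

Lemma ImM (r : R) (c : R[i]) : complex.Im ((r%:C)%C * c) = r * complex.Im c.
Proof. by case: c => a b /=; rewrite mul0r addr0. Qed.

Lemma dmx_alpha n (f : 'I_n -> M -> R) (m : 'I_n -> 'M[R[i]]_2)
  (alpha : M -> 'M[R[i]]_2) (w z : M) :
  (forall k p, derivable (f k) p w) ->
  (forall y, alpha y = \sum_k ((f k y)%:C)%C *: m k) ->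
  dmx w alpha z = \sum_k (('D_w (f k) z)%:C)%C *: m k.
Proof.
move=> df Ha; apply/matrixP => a b; rewrite /dmx mxE summxE.
have -> : (fun y => complex.Re (alpha y a b)) =
   (fun y => \sum_k f k y * complex.Re (m k a b)).
  apply/funext => y; rewrite Ha summxE ReSum; apply: eq_bigr => k _.
  by rewrite mxE ReM.
have -> : (fun y => complex.Im (alpha y a b)) =
   (fun y => \sum_k f k y * complex.Im (m k a b)).
  apply/funext => y; rewrite Ha summxE ImSum; apply: eq_bigr => k _.
  by rewrite mxE ImM.
rewrite (derive_lin _ (df^~ z)).2 (derive_lin _ (df^~ z)).2.
rewrite (eq_bigr (fun k => (('D_w (f k) z)%:C)%C * m k a b)); last first.
  by move=> k _; rewrite mxE.
by rewrite sumC.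
Qed.

Lemma quadsum n (r : 'I_n -> R) (m : 'I_n -> 'M[R[i]]_2) (A : 'M[R[i]]_2)
  (v : 'cV[R[i]]_2) : A = \sum_k ((r k)%:C)%C *: m k ->
  (adjv v *m A *m v) 0 0 = \sum_k ((r k)%:C)%C * (adjv v *m m k *m v) 0 0.
Proof.
move=> ->; rewrite mulmx_sumr mulmx_suml summxE; apply: eq_bigr => k _.
by rewrite -scalemxAr -scalemxAl mxE.
Qed.

Lemma adjv0 : adjv (0 : 'cV[R[i]]_2) = 0.
Proof. by apply/matrixP => i j; rewrite !mxE rmorph0. Qed.

Lemma adjv_col (v1 v2 : 'cV[R[i]]_2) :
  adjv (col_mx v1 v2) = row_mx (adjv v1) (adjv v2).
Proof. by rewrite map_col_mx tr_col_mx. Qed.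

Lemma quad_ul (A B C D : 'M[R[i]]_2) (v : 'cV[R[i]]_2) :
  (adjv (col_mx v 0) *m block_mx A B C D *m col_mx v 0) 0 0 =
  (adjv v *m A *m v) 0 0.
Proof.
by rewrite adjv_col adjv0 mul_row_block mul_row_col !mul0mx !addr0 mulmx0 addr0.
Qed.

Lemma quad_dr (A B C D : 'M[R[i]]_2) (v : 'cV[R[i]]_2) :
  (adjv (col_mx 0 v) *m block_mx A B C D *m col_mx 0 v) 0 0 =
  (adjv v *m D *m v) 0 0.
Proof.
by rewrite adjv_col adjv0 mul_row_block mul_row_col !mul0mx !add0r mulmx0 add0r.
Qed.

Lemma cge0 (q : R[i]) : 0 <= q -> complex.Im q = 0 /\ 0 <= complex.Re q.
Proof. by rewrite lecE => /andP [/eqP -> ->]. Qed.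

Lemma two_ge0 (A : 'M[R[i]]_2) (v : 'cV[R[i]]_2) :
  0 <= (adjv v *m (2%:R *: A) *m v) 0 0 -> 0 <= (adjv v *m A *m v) 0 0.
Proof.
by rewrite -scalemxAr -scalemxAl mxE pmulr_rge0 // ltr0n.
Qed.

End C.
Section F.
Variable R : realType.
Local Notation M := 'rV[R]_2.
Local Notation adjv v := ((map_mx Num.conj v)^T).

Lemma subE m' n' (A B : 'M[R[i]]_(m', n')) i j : (A - B) i j = A i j - B i j.
Proof. by rewrite !mxE. Qed.

Lemma eq_ler_trans_helper (a : R) : a = 0 -> 0 <= a.
Proof. by move=> ->. Qed.

Lemma sumNr n (h g : 'I_n -> R) :
  \sum_k h k * - g k = - \sum_k h k * g k.
Proof. by rewrite -sumrN; apply: eq_bigr => k _; rewrite mulrN. Qed.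

Lemma forward (d1 d2 : R) (alpha : M -> 'M[R[i]]_2) (x y : M) :
  causal_cone d1 d2 alpha -> causal_le x y -> lemx (alpha x) (alpha y).
Proof.
case=> [[n [f [m [gen Ha]]]] sa pos] hxy.
have df k p w : derivable (f k) p w.
  by apply: diff_derivable; case: (gen k) => sm _ _; exact: (sm [::] p).
split.
  apply/matrixP => i j; rewrite !mxE.
  move: (sa x) (sa y) => /matrixP/(_ i j) + /matrixP/(_ i j); rewrite !mxE.
  by move=> hx hy; rewrite -hx -hy; apply: rmorphB.
move=> v.
pose c k := (adjv v *m m k *m v) 0 0.
have key w (hw : forall p, 0 <= (adjv v *m dmx w alpha p *m v) 0 0) p :
   0 <= \sum_k 'D_w (f k) p * complex.Re (c k) /\
   \sum_k 'D_w (f k) p * complex.Im (c k) = 0.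
  have := hw p; rewrite (quadsum _ (dmx_alpha p (fun k q => df k q w) Ha)) sumC.
  by case/cge0 => h1 h2; split; [exact: h2 | exact: h1].
have hu p : 0 <= (adjv v *m dmx (dir_u R) alpha p *m v) 0 0.
  have [_ /(_ (col_mx v 0))] := pos p.
  by rewrite quad_ul => /two_ge0.
have hv p : 0 <= (adjv v *m dmx (dir_v R) alpha p *m v) 0 0.
  have [_ /(_ (col_mx 0 v))] := pos p.
  by rewrite quad_dr => /two_ge0.
have mono (g : 'I_n -> R) :
   (forall w, (forall p, 0 <= (adjv v *m dmx w alpha p *m v) 0 0) ->
        forall p, 0 <= \sum_k 'D_w (f k) p * g k) ->
   (\sum_k f k x * g k) <= (\sum_k f k y * g k).
  move=> hg.
  apply: (mono_causal (g := fun z => \sum_k f k z * g k)) => //.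
  - by move=> p; exact: (derive_lin _ (fun k => df k p _)).1.
  - by move=> p; exact: (derive_lin _ (fun k => df k p _)).1.
  - by move=> p; rewrite (derive_lin _ (fun k => df k p _)).2; exact: hg.
  - by move=> p; rewrite (derive_lin _ (fun k => df k p _)).2; exact: hg.
have hR := mono (fun k => complex.Re (c k)) (fun w hw p => (key w hw p).1).
have hI1 := mono (fun k => complex.Im (c k))
  (fun w hw p => eq_ler_trans_helper (key w hw p).2).
have hI2 := mono (fun k => - complex.Im (c k)).
have {hI2} hI2 : \sum_k f k x * - complex.Im (c k) <= \sum_k f k y * - complex.Im (c k).
  apply: hI2 => w hw p.
  rewrite (eq_bigr (fun k => - ('D_w (f k) p * complex.Im (c k)))); last first.
    by move=> k _; rewrite mulrN.
  by rewrite sumrN (key w hw p).2 oppr0.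
rewrite mulmxBr mulmxBl subE (quadsum _ (Ha y)) (quadsum _ (Ha x)) !sumC.
rewrite lecE /=; apply/andP; split; last by rewrite subr_ge0.
move: hI2; rewrite !sumNr lerN2 => hI2.
by rewrite subr_eq0; apply/eqP/le_anti/andP; split; [exact: hI2|exact: hI1].
Qed.
End F.
Section G.
Variable R : realType.
Local Notation M := 'rV[R]_2.

Definition sig (t : R) : R := (1 + expR (- t))^-1.

Lemma sig_pos_den (t : R) : 0 < 1 + expR (- t).
Proof. by rewrite addr_gt0 // expR_gt0. Qed.

Lemma sig_ge0 t : 0 <= sig t.
Proof. by rewrite /sig invr_ge0 ltW // sig_pos_den. Qed.

Lemma sig_le1 t : sig t <= 1.
Proof. by rewrite /sig invf_le1 ?sig_pos_den // lerDl ltW // expR_gt0. Qed.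

Lemma sig_lt (a b : R) : a < b -> sig a < sig b.
Proof.
move=> ab; rewrite /sig ltf_pV2 ?posrE ?sig_pos_den // ltrD2l ltr_expR.
by rewrite ltrN2.
Qed.

Lemma sig_le (a b : R) : a <= b -> sig a <= sig b.
Proof.
move=> ab; rewrite /sig lef_pV2 ?posrE ?sig_pos_den // lerD2l ler_expR.
by rewrite lerN2.
Qed.

Lemma sig_derive (t : R) : is_derive t 1 sig (sig t * (1 - sig t)).
Proof.
have h1 : is_derive t 1 (fun s : R => - s) (-1).
  exact: is_deriveNid.
have h2 : is_derive t 1 (expR \o (fun s : R => - s)) (expR (- t) * -1).
  by apply: is_derive1_comp.
have h3 := is_deriveD (is_derive_cst (1:R) t 1) h2.
have h4 := is_deriveV (f := cst 1 + (expR \o (fun s : R => - s))) (lt0r_neq0 (sig_pos_den t)) h3.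

have -> : sig = (fun y => ((cst 1 + (expR \o (fun s : R => - s))) y)^-1) by [].
apply: (is_derive_eq h4).
rewrite /sig; have := sig_pos_den t; set d := 1 + expR (- t) => d0.
have e : expR (- t) = d - 1 by rewrite /d addrC addKr.
rewrite e /=.
change ((cst 1 + (expR \o (fun s : R => - s))) t) with d.
rewrite -[_ *: _]/(_ * _); field; exact: lt0r_neq0.
Qed.

Definition dpol (p : {poly R}) : {poly R} := p^`() * ('X * (1 - 'X)).

Definition H (p : {poly R}) (t : R) : R := p.[sig t].

Lemma H_derive (p : {poly R}) (t : R) : is_derive t 1 (H p) ((dpol p).[sig t]).
Proof.
apply: is_derive_eq.
  exact: (is_derive1_comp (is_derive_poly p (sig t)) (sig_derive t)).
by rewrite /dpol !hornerE.
Qed.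

Lemma H_diff (p : {poly R}) (t : R) : differentiable (H p) t.
Proof. by apply/derivable1_diffP; have [] := H_derive p t. Qed.

Lemma D_scal (h : R -> R) (k s : R) : differentiable h s ->
  'D_k h s = k * 'D_1 h s.
Proof.
move=> dh; rewrite !deriveE //.
by rewrite -[in LHS](mulr1 k) -[k * 1]/(k *: (1:R)) linearZ.
Qed.

Lemma H_D (p : {poly R}) (k t : R) : 'D_k (H p) t = k * (dpol p).[sig t].
Proof.
rewrite D_scal; last exact: H_diff.
by case: (H_derive p t) => _ E; congr (_ * _); exact: E.
Qed.

Lemma horner_bound (p : {poly R}) s : 0 <= s -> s <= 1 ->
  `|p.[s]| <= \sum_(i < size p) `|p`_i|.
Proof.
move=> s0 s1; rewrite horner_coef; apply: le_trans (ler_norm_sum _ _ _) _.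
apply: ler_sum => i _; rewrite normrM normrX.
rewrite ler_piMr // exprn_ile1 // ger0_norm //.
Qed.

End G.
Section B.
Variable R : realType.
Local Notation M := 'rV[R]_2.
Local Notation adjv v := ((map_mx Num.conj v)^T).

Variable L : M -> R.
Hypothesis HLd : forall x : M, differentiable L x.
Hypothesis HLl : forall (e : R) (w x : M), L (e *: w + x) = e *: L w + L x.

Definition GL (p : {poly R}) : M -> R := fun x => H p (L x).

Lemma GL_D (p : {poly R}) (w z : M) :
  'D_w (GL p) z = L w * (dpol p).[sig (L z)].
Proof.
have E := @derive_aff R _ _ (H p) L z w (L w) (fun e => HLl e w z).
rewrite (_ : GL p = H p \o L) //; rewrite E.2; exact: H_D.
Qed.

Lemma GL_diff (p : {poly R}) (z : M) : differentiable (GL p) z.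
Proof. exact: (differentiable_comp (HLd z) (H_diff p (L z))). Qed.

Lemma GL_partial i (p : {poly R}) :
  partial i (GL p) = GL (L (delta_mx 0 i) *: dpol p).
Proof.
apply/funext => x; rewrite /partial GL_D /GL /H hornerZ; done.
Qed.

Lemma GL_iter ds (p : {poly R}) : exists q, iter_partial ds (GL p) = GL q.
Proof.
rewrite /iter_partial; elim: ds => [|i ds [q IH]] /=; first by exists p.
by exists (L (delta_mx 0 i) *: dpol q); rewrite IH GL_partial.
Qed.

Lemma GL_gen : (forall x y, causal_le x y -> L x <= L y) ->
  causal_generator (GL 'X).
Proof.
move=> HLm; split.
- by move=> ds x; have [q ->] := GL_iter ds 'X; exact: GL_diff.
- move=> ds; have [q ->] := GL_iter ds 'X.
  exists (\sum_(i < size q) `|q`_i|) => x.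
  by apply: horner_bound; [apply: sig_ge0 | apply: sig_le1].
- by move=> x y h; rewrite /GL /H !hornerX; apply: sig_le; exact: HLm.
Qed.

Lemma GL_Dpos (w z : M) : 0 <= L w -> 0 <= 'D_w (GL 'X) z.
Proof.
move=> hw; rewrite GL_D /dpol derivX mul1r hornerM hornerD hornerN hornerX hornerC.
apply: mulr_ge0 => //; apply: mulr_ge0; first exact: sig_ge0.
by rewrite subr_ge0 sig_le1.
Qed.

Definition alphaL (z : M) : 'M[R[i]]_2 := ((GL 'X z)%:C)%C *: 1%:M.

Lemma adj_scal (a : R[i]) : Num.conj a = a -> adjmx (a *: (1%:M : 'M[R[i]]_2)) = a *: 1%:M.
Proof.
move=> ha; apply/matrixP => i j; rewrite !mxE eq_sym.
by case: (i == j); rewrite /= ?mulr1 ?mulr0 ?rmorph0 ?ha.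
Qed.

Lemma adj0 : adjmx (0 : 'M[R[i]]_2) = 0.
Proof. by apply/matrixP => i j; rewrite !mxE rmorph0. Qed.

Lemma addE m' n' (A B : 'M[R[i]]_(m', n')) i j : (A + B) i j = A i j + B i j.
Proof. by rewrite !mxE. Qed.

Lemma qscal (a : R[i]) (u : 'cV[R[i]]_2) :
  (adjv u *m (a *: 1%:M) *m u) 0 0 = a * (adjv u *m u) 0 0.
Proof. by rewrite -scalemxAr mulmx1 -scalemxAl mxE. Qed.

Lemma qpos (u : 'cV[R[i]]_2) : 0 <= (adjv u *m u) 0 0.
Proof.
rewrite !mxE; apply: sumr_ge0 => j _; rewrite !mxE mulrC; exact: mul_conjC_ge0.
Qed.

Lemma psd_diag (a b : R[i]) : 0 <= a -> 0 <= b ->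
  psdmx (block_mx (a *: (1%:M : 'M[R[i]]_2)) 0 0 (b *: (1%:M : 'M[R[i]]_2))).
Proof.
move=> ha hb; split.
  rewrite /hermmx /adjmx map_block_mx tr_block_mx.
  rewrite -!/(adjmx _) !adj_scal ?adj0 //; exact: conj_Creal (ger0_real _).
move=> w; rewrite -(vsubmxK w) adjv_col mul_row_block mul_row_col.
rewrite !mulmx0 addr0 add0r addE !qscal.
by apply: addr_ge0; apply: mulr_ge0 => //; apply: qpos.
Qed.

Lemma psd_diag2 (a b : R) : 0 <= a -> 0 <= b ->
  psdmx (block_mx (2%:R *: ((a%:C)%C *: (1%:M : 'M[R[i]]_2))) 0 0
                  (2%:R *: ((b%:C)%C *: (1%:M : 'M[R[i]]_2)))).
Proof.
move=> ha hb.
have e (c : R[i]) : 2%:R *: (c *: (1%:M : 'M[R[i]]_2)) = (2%:R * c) *: 1%:M.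
  by rewrite scalerA.
rewrite e e; apply: psd_diag; apply: mulr_ge0; by rewrite ?ler0n // ler0c.
Qed.

Lemma alpha_cone (d1 d2 : R) :
  (forall x y, causal_le x y -> L x <= L y) ->
  0 <= L (dir_u R) -> 0 <= L (dir_v R) -> causal_cone d1 d2 alphaL.
Proof.
move=> HLm hu hv.
have df : forall (k : 'I_1) (p w : M), derivable ((fun _ => GL 'X) k) p w.
  by move=> k p w; apply: diff_derivable; apply: GL_diff.
have Ha : forall y, alphaL y = \sum_(k < 1) (((fun _ => GL 'X) k y)%:C)%C *: (fun _ => 1%:M) k.
  by move=> y; rewrite big_ord1.
split.
- exists 1%N, (fun _ => GL 'X), (fun _ => 1%:M); split => // k; exact: GL_gen.
- move=> x; apply: adj_scal; exact: conjc_real.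
move=> z.
have ew : forall w, dmx w alphaL z = (('D_w (GL 'X) z)%:C)%C *: 1%:M.
  by move=> w; rewrite (dmx_alpha z (fun k p => df k p w) Ha) big_ord1.
have eu := ew (dir_u R).
have ev := ew (dir_v R).
have cz : commDF d1 d2 (alphaL z) = 0.
  by rewrite /commDF /alphaL -scalemxAr -scalemxAl mulmx1 mul1mx subrr.
rewrite /causal_block /d_u /d_v eu ev cz oppr0.
exact: (psd_diag2 (GL_Dpos z hu) (GL_Dpos z hv)).
Qed.

Lemma qone : (adjv (const_mx 1 : 'cV[R[i]]_2) *m (const_mx 1 : 'cV[R[i]]_2)) 0 0 = 2%:R.
Proof.
rewrite !mxE (eq_bigr (fun _ => 1)); last by move=> j _; rewrite !mxE rmorph1 mulr1.
by rewrite sumr_const card_ord.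
Qed.

Lemma not_le (x y : M) : L y < L x -> ~ lemx (alphaL x) (alphaL y).
Proof.
move=> hlt [_ /(_ (const_mx 1))].
rewrite /alphaL -scalerBl -rmorphB qscal qone pmulr_lge0 ?ltr0n // ler0c.
rewrite subr_ge0 /GL /H !hornerX leNgt.
by move/negP; apply; apply: sig_lt.
Qed.

End B.
Lemma lcu_diff (R : realType) (x : 'rV[R]_2) : differentiable (@lc_u R) x.
Proof. exact: (differentiableD (differentiable_coord x 0 0) (differentiable_coord x 0 1)). Qed.

Lemma lcv_diff (R : realType) (x : 'rV[R]_2) : differentiable (@lc_v R) x.
Proof. exact: (differentiableB (differentiable_coord x 0 0) (differentiable_coord x 0 1)). Qed.

Lemma lcu_lin (R : realType) (e : R) (w x : 'rV[R]_2) :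
  lc_u (e *: w + x) = e *: lc_u w + lc_u x.
Proof. rewrite /lc_u /x0 /x1 !mxE -[e *: _]/(e * _); ring. Qed.

Lemma lcv_lin (R : realType) (e : R) (w x : 'rV[R]_2) :
  lc_v (e *: w + x) = e *: lc_v w + lc_v x.
Proof. rewrite /lc_v /x0 /x1 !mxE -[e *: _]/(e * _); ring. Qed.

Theorem mainTheorem2 (R : realType) (d1 d2 : R) (x y : 'rV[R]_2) :
  causal_le x y <->
  (forall alpha : 'rV[R]_2 -> 'M[R[i]]_2,
      causal_cone d1 d2 alpha -> lemx (alpha x) (alpha y)).
Proof.
split; first by move=> hxy alpha ha; exact: forward ha hxy.
move=> Hall; split; rewrite leNgt; apply/negP => hlt.
- have NL := not_le hlt; apply: NL; apply: Hall.
  apply: alpha_cone => //;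
  first [ exact: lcu_diff | exact: lcu_lin | by move=> a b [] |
          by rewrite /lc_u /x0 /x1 !mxE /=; lra ].
- have NL := not_le hlt; apply: NL; apply: Hall.
  apply: alpha_cone => //;
  first [ exact: lcv_diff | exact: lcv_lin | by move=> a b [] |
          by rewrite /lc_v /x0 /x1 !mxE /=; lra ].
Qed.
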